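(* Let $n\ge2$ be even and $x\in C_1^n$. For every $1\le i\le n-2$, the simple reflections $s_i$ and $s_{i+1}$ do not both belong to $\tau_{\mathbf m}(x)$.
   Context: $s_i=(i,i+1)$; permutations compose right to left. $\mathcal F_n$ is the set of fixed-point-free involutions of $S_n$, conjugation action, height $\ell/2$; Bruhat order: weakest partial order with $z\le tzt$ for transpositions $t$ with $\ell(z)\le\ell(tzt)$; $\tau_{\mathbf m}(z)=\{s_i:s_izs_i\le z\}$. $\mu_{\mathbf m}(x,y)$ is the coefficient of $v^{-1}$ in $m_{x,y}$, where $\underline M_y=\sum_xm_{x,y}M_x$ is the canonical basis (bar-invariant, $\underline M_y\in M_y+\sum_{x<y}v^{-1}\mathbb Z[v^{-1}]M_x$, bar involution fixing $M_{s_1s_3\cdots s_{n-1}}$) of the $\mathcal H(S_n)$-module with basis $M_z$, $H_sM_z=M_{szs}$ if $\ell(szs)>\ell(z)$, $M_{szs}+(v-v^{-1})M_z$ if $\ell(szs)<\ell(z)$, $vM_z$ if $szs=z$. $\omega_{\mathbf m}(x\to y)=\mu_{\mathbf m}(x,y)+\mu_{\mathbf m}(y,x)$ if $\tau_{\mathbf m}(x)\not\subseteq\tau_{\mathbf m}(y)$, else $0$; a bidirected edge joins $x,y$ if both $\omega_{\mathbf m}(x\to y),\omega_{\mathbf m}(y\to x)\ne0$; molecules are connected components of the graph of bidirected edges. $C_1^n$ is the molecule containing $s_1s_3\cdots s_{n-1}$. *)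

(* Defs.v *)
From HB Require Import structures.
From mathcomp Require Import all_boot all_order all_algebra all_fingroup.
From mathcomp Require Import finmap.

Set Implicit Arguments.
Unset Strict Implicit.
Unset Printing Implicit Defensive.

Import GRing.Theory.
Local Open Scope fset_scope.

(* Laurent polynomials Z[v, v^-1], represented by their finitely        *)
(* supported coefficient function k |-> (coefficient of v^k).           *)
Definition laurent := {fsfun int -> int with 0%R}.

Definition lzero : laurent := [fsfun for fun _ => 0%R].
(* c v^d *)
Definition lmono (c : int) (d : int) : laurent :=
  [fsfun k in [fset d] => if k == d then c else 0%R].
Definition lone : laurent := lmono 1 0.
Definition ladd (f g : laurent) : laurent :=
  [fsfun k in finsupp f `|` finsupp g => (f k + g k)%R].
Definition lopp (f : laurent) : laurent :=
  [fsfun k in finsupp f => (- f k)%R].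
Definition lmul (f g : laurent) : laurent :=
  [fsfun k in [fset (a + b)%R | a in finsupp f, b in finsupp g] =>
     (\sum_(a <- finsupp f) f a * g (k - a))%R].
(* the ring involution v |-> v^-1 *)
Definition lbar (f : laurent) : laurent :=
  [fsfun k in [fset (- a)%R | a in finsupp f] => f (- k)%R].
Definition vmvinv : laurent := ladd (lmono 1 1) (lmono (-1) (-1)).

(* Permutations of {1..n} (encoded as 'I_n, value k <-> k+1).           *)

(* simple reflection s_i = (i, i+1), meaningful for 1 <= i <= n-1 *)
Definition sref (n i : nat) : 'S_n :=
  match n as n0 return 'S_n0 with
  | 0 => 1%g
  | m.+1 => tperm (@inord m i.-1) (@inord m i)
  end.

Definition ell n (w : 'S_n) : nat :=
  #|[set p : 'I_n * 'I_n | (p.1 < p.2)%N && (w p.2 < w p.1)%N]|.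

Definition is_transposition n (t : 'S_n) : bool :=
  [exists i : 'I_n, exists j : 'I_n, (i != j) && (t == tperm i j)].

Definition fpf_invol n (z : 'S_n) : bool :=
  ((z * z)%g == 1%g) && [forall k : 'I_n, z k != k].

Definition F n := {z : 'S_n | fpf_invol z}.

(* conjugation of z in F_n by a permutation s (s z s^-1 is again in F_n
   when s is an involution; insubd only supplies a default value) *)
Definition conjF n (s : 'S_n) (z : F n) : F n :=
  insubd z (s * val z * s^-1)%g.

Definition z0perm n : 'S_n := (\prod_(i < n | odd i) sref n i)%g.

(* Bruhat order on F_n: the weakest partial order with z <= tzt for     *)
(* transpositions t with ell(z) <= ell(tzt), i.e. the reflexive          *)
(* transitive closure of these covering steps.                          *)
Definition bruhat_step n (a b : F n) : bool :=
  [exists t : 'S_n, [&& is_transposition t,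
                        val b == (t * val a * t)%g & ell (val a) <= ell (val b)]].

Definition bruhat_le n (a b : F n) : bool := connect (@bruhat_step n) a b.
Definition bruhat_lt n (a b : F n) : bool := (a != b) && bruhat_le a b.

(* tau_m(z) as a set of indices i in {1..n-1}: s_i z s_i <= z *)
Definition tau n (z : F n) (i : nat) : bool :=
  [&& 0 < i, i < n & bruhat_le (conjF (sref n i) z) z].

Definition tau_subset n (x y : F n) : bool :=
  [forall i : 'I_n, tau x i ==> tau y i].

(* The H(S_n)-module with Z[v,v^-1]-basis (M_z)_{z in F_n}; an element   *)
(* is its coordinate function z |-> coefficient of M_z.                  *)
Definition module n := F n -> laurent.

Definition Mbasis n (y : F n) : module n :=
  fun w => if w == y then lone else lzero.

Definition madd n (a b : module n) : module n := fun w => ladd (a w) (b w).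
Definition mscale n (f : laurent) (a : module n) : module n :=
  fun w => lmul f (a w).

(* action of H_s on the module, extended Z[v,v^-1]-linearly from
   H_s M_z = M_szs                  if ell(szs) > ell(z),
             M_szs + (v-v^-1) M_z   if ell(szs) < ell(z),
             v M_z                  if szs = z. *)
Definition Hact n (s : 'S_n) (m : module n) : module n :=
  fun w =>
    let u := conjF s w in
    if u == w then lmul (lmono 1 1) (m w)
    else if ell (val u) < ell (val w) then ladd (m u) (lmul vmvinv (m w))
    else m u.

(* action of H_s^-1 = H_s - (v - v^-1) *)
Definition Hinvact n (s : 'S_n) (m : module n) : module n :=
  madd (Hact s m) (mscale (lopp vmvinv) m).

Definition is_bar_involution n (B : module n -> module n) : Prop :=
  [/\ forall a b, B (madd a b) = madd (B a) (B b),
      forall f a, B (mscale f a) = mscale (lbar f) (B a),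
      forall i a, (0 < i < n)%N ->
         B (Hact (sref n i) a) = Hinvact (sref n i) (B a)
    & forall z : F n, val z = z0perm n -> B (Mbasis z) = Mbasis z].

(* C y is the canonical basis element \underline M_y, with coordinates
   m_{x,y} = C y x *)
Definition is_canonical_basis n (B : module n -> module n)
    (C : F n -> module n) : Prop :=
  forall y : F n,
    [/\ B (C y) = C y,
        C y y = lone
      & forall x : F n, x != y ->
          (bruhat_lt x y /\ forall k : int, (0 <= k)%R -> C y x k = 0%R)
          \/ C y x = lzero].

Definition mu n (C : F n -> module n) (x y : F n) : int := C y x (-1)%R.

Definition omega n (C : F n -> module n) (x y : F n) : int :=
  if ~~ tau_subset x y then (mu C x y + mu C y x)%R else 0%R.

Definition bidirected n (C : F n -> module n) (x y : F n) : bool :=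
  (omega C x y != 0%R) && (omega C y x != 0%R).

Definition in_C1 n (C : F n -> module n) (x : F n) : Prop :=
  exists z : F n, val z = z0perm n /\ connect (@bidirected n C) z x.

(* Main.v *)
Require Import Defs.
From mathcomp Require Import all_boot all_order all_algebra all_fingroup.
From mathcomp Require Import finmap.
From mathcomp Require Import zify ring lra.
From Stdlib Require Import FunctionalExtensionality.

Set Implicit Arguments.
Unset Strict Implicit.
Unset Printing Implicit Defensive.
Import GRing.Theory.
Local Open Scope fset_scope.

Section Laurent.
Local Open Scope ring_scope.

Lemma lzeroE k : lzero k = 0.
Proof. by rewrite /lzero fsfunE. Qed.

Lemma lmonoE c d k : lmono c d k = if k == d then c else 0.
Proof. by rewrite /lmono fsfunE inE; case: (k == d). Qed.

Lemma loneE k : lone k = if k == 0 then 1 else 0.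
Proof. exact: lmonoE. Qed.

Lemma laddE f g k : ladd f g k = f k + g k.
Proof.
rewrite /ladd fsfunE inE; case: ifP => //.
by move/negbT; rewrite negb_or !memNfinsupp => /andP[/eqP -> /eqP ->].
Qed.

Lemma loppE f k : lopp f k = - f k.
Proof.
rewrite /lopp fsfunE; case: ifP => //.
by move/negbT; rewrite memNfinsupp => /eqP ->; rewrite oppr0.
Qed.

Lemma lbarE f k : lbar f k = f (- k).
Proof.
rewrite /lbar fsfunE; case: ifP => // H.
apply/esym/eqP; rewrite -memNfinsupp; apply/negP => Hk; move/negP: H; apply.
by apply/imfsetP; exists (- k) => //=; rewrite opprK.
Qed.

Lemma lmulE f g k : lmul f g k = \sum_(a <- finsupp f) f a * g (k - a).
Proof.
rewrite /lmul fsfunE; case: ifP => // H.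
apply/esym/big1_seq => a /andP[_ Ha].
have -> : g (k - a) = 0; last by rewrite mulr0.
apply/eqP; rewrite -memNfinsupp; apply/negP => Hb; move/negP: H; apply.
apply/imfset2P; exists a => //; exists (k - a) => //.
by rewrite addrC subrK.
Qed.

Lemma lmul_monoE c d g k : lmul (lmono c d) g k = c * g (k - d).
Proof.
rewrite lmulE.
have [->|c0] := eqVneq c 0.
  by rewrite mul0r; apply: big1_seq => a _; rewrite lmonoE; case: ifP; rewrite mul0r.
have -> : finsupp (lmono c d) = [fset d].
  apply/fsetP => a; rewrite mem_finsupp lmonoE inE.
  by case: (a == d) => //; rewrite eqxx.
by rewrite big_seq_fset1 lmonoE eqxx.
Qed.

Lemma lmul0E g k : lmul lzero g k = 0.
Proof.
rewrite lmulE; apply: big1_seq => a _; by rewrite lzeroE mul0r.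
Qed.

Lemma lmulr0E f k : lmul f lzero k = 0.
Proof.
rewrite lmulE; apply: big1_seq => a _; by rewrite lzeroE mulr0.
Qed.

Lemma lmul1E f k : lmul f lone k = f k.
Proof.
rewrite lmulE.
rewrite (eq_bigr (fun a => if a == k then f a else 0)); last first.
  move=> a _; rewrite loneE subr_eq0 eq_sym.
  by case: (a == k); rewrite ?mulr1 ?mulr0.
case: finsuppP => [Hk|Hk].
  apply: big1_seq => a /andP[_ Ha]; case: eqP => // E.
  by move: Hk; rewrite -E Ha.
rewrite (bigD1_seq k) ?fset_uniq //= eqxx big1 ?addr0 // => a /negbTE ->.
by [].
Qed.

Lemma lmulE_sub f g k S : finsupp f `<=` S ->
  lmul f g k = \sum_(a <- S) f a * g (k - a).
Proof.
move=> sub; rewrite lmulE; apply: big_fset_incl => // a _ Ha.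
by rewrite (fsfun_dflt Ha) mul0r.
Qed.

Lemma ladd_sub f g : finsupp (ladd f g) `<=` finsupp f `|` finsupp g.
Proof.
apply/fsubsetP => a; rewrite mem_finsupp laddE inE !mem_finsupp.
by apply: contraR; rewrite negb_or !negbK => /andP[/eqP -> /eqP ->]; rewrite addr0.
Qed.

Lemma lmono_sub c d : finsupp (lmono c d) `<=` [fset d].
Proof.
apply/fsubsetP => a; rewrite mem_finsupp lmonoE inE.
by case: (a == d); rewrite ?eqxx.
Qed.

Lemma vmv_sub : finsupp vmvinv `<=` [fset 1; -1].
Proof.
apply/fsubsetP => a /(fsubsetP (ladd_sub _ _)); rewrite inE.
case/orP => /(fsubsetP (lmono_sub _ _)); rewrite !inE => ->; by rewrite ?orbT.
Qed.

Lemma one_neq_m1 : (1 == -1 :> int) = false. Proof. by []. Qed.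
Lemma m1_neq_one : (-1 == 1 :> int) = false. Proof. by []. Qed.
Lemma one_notin_m1 : (1:int) \notin [fset (-1 : int)]. Proof. by rewrite inE. Qed.

Lemma lvmvE g k : lmul vmvinv g k = g (k - 1) - g (k + 1).
Proof.
rewrite (lmulE_sub _ _ vmv_sub).
rewrite big_fsetU1 ?one_notin_m1 // big_seq_fset1 !laddE !lmonoE !eqxx one_neq_m1 m1_neq_one /=.
by rewrite addr0 sub0r mul1r mulN1r opprK.
Qed.

Lemma lopp_vmvE g k : lmul (lopp vmvinv) g k = g (k + 1) - g (k - 1).
Proof.
have sub : finsupp (lopp vmvinv) `<=` [fset 1; -1].
  apply: fsubset_trans vmv_sub; apply/fsubsetP => a.
  by rewrite !mem_finsupp loppE oppr_eq0.
rewrite (lmulE_sub _ _ sub).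
rewrite big_fsetU1 ?one_notin_m1 // big_seq_fset1 !loppE !laddE !lmonoE !eqxx one_neq_m1 m1_neq_one /=.
rewrite addr0 sub0r mul1r mulN1r !opprK.
by rewrite addrC.
Qed.

Lemma lext (f g : laurent) : (forall k, f k = g k) -> f = g.
Proof. by move=> H; apply/fsfunP. Qed.

Lemma lbar0 : lbar lzero = lzero.
Proof. by apply: lext => k; rewrite lbarE !lzeroE. Qed.

End Laurent.

Set Implicit Arguments.
Unset Strict Implicit.
Unset Printing Implicit Defensive.
Import GRing.Theory.
Local Open Scope fset_scope.

Local Open Scope group_scope.
Lemma fpf_conj n (t z : 'S_n) : fpf_invol z -> fpf_invol (t * z * t^-1)%g.
Proof.
case/andP => /eqP zz /forallP zf; apply/andP; split.
  apply/eqP; rewrite -!mulgA (mulgA t^-1) mulVg mul1g (mulgA z) zz mul1g.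
  by rewrite mulgV.
apply/forallP => k; rewrite !permM; apply/negP => /eqP E.
have := zf (t k); rewrite -{2}E permKV eqxx //.
Qed.

Lemma conjF_val n (t : 'S_n) z : val (conjF t z) = (t * val z * t^-1)%g.
Proof. by rewrite /conjF insubdK // /in_mem /= fpf_conj // (valP z). Qed.

Lemma conjFK n (t : 'S_n) z : (t * t = 1)%g -> conjF t (conjF t z) = z.
Proof.
move=> tt; have tV : (t^-1 = t)%g by rewrite -[LHS]mul1g -tt -mulgA mulgV mulg1.
apply: val_inj; rewrite !conjF_val tV.
by rewrite !mulgA tt mul1g -mulgA tt mulg1.
Qed.

Lemma sref_invol n i : (sref n i * sref n i = 1)%g.
Proof. case: n => [|m] /=; first by rewrite mulg1. by rewrite tperm2. Qed.

Local Close Scope group_scope.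
Definition mzero n : module n := fun _ => lzero.

Fixpoint msum n (l : seq (F n)) (h : F n -> module n) : module n :=
  match l with
  | [::] => @mzero n
  | u :: l' => madd (h u) (msum l' h)
  end.

Lemma msumE n (l : seq (F n)) h w k :
  msum l h w k = (\sum_(u <- l) h u w k)%R.
Proof.
elim: l => [|u l IH] /=; first by rewrite big_nil /mzero lzeroE.
by rewrite big_cons /madd laddE IH.
Qed.

Lemma mext n (a b : module n) : (forall w k, a w k = b w k) -> a = b.
Proof. move=> H; apply: functional_extensionality => w; apply: lext; exact: H. Qed.

Section BarLemmas.
Variables (n : nat) (B : module n -> module n) (hB : is_bar_involution B).

Lemma B_mzero : B (@mzero n) = @mzero n.
Proof.
case: hB => _ hs _ _.
have E : forall a : module n, mscale lzero a = @mzero n.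
  by move=> a; apply: mext => w k; rewrite /mscale lmul0E /mzero lzeroE.
by rewrite -(E (@mzero n)) hs lbar0 E.
Qed.

Lemma B_msum l h : B (msum l h) = msum l (fun u => B (h u)).
Proof.
case: hB => ha _ _ _.
elim: l => [|u l IH] /=; first exact: B_mzero.
by rewrite ha IH.
Qed.

Definition ellF (w : F n) := ell (val w).

Lemma decomp (m : module n) :
  m = msum (enum {: F n}) (fun u => mscale (m u) (Mbasis u)).
Proof.
apply: mext => w k; rewrite msumE.
rewrite (bigD1_seq w) ?mem_enum ?enum_uniq //=.
rewrite /mscale /Mbasis eqxx lmul1E big1 ?GRing.addr0 // => u /negbTE uw.
by rewrite eq_sym uw lmulr0E.
Qed.

Hypothesis triang : forall u : F n, B (Mbasis u) u = lone /\
  forall w, w != u -> (ellF u <= ellF w)%N -> B (Mbasis u) w = lzero.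

Lemma bar_top (m : module n) (w : F n) :
  B m = m -> (forall u, (ellF w < ellF u)%N -> m u = lzero) ->
  forall k, m w (- k)%R = m w k.
Proof.
move=> Bm top k.
case: hB => ha hs _ _.
have := congr1 (fun a : module n => a w k) Bm.
rewrite {1}(decomp m) B_msum msumE => <-.
rewrite (bigD1_seq w) ?mem_enum ?enum_uniq //=.
rewrite hs /mscale (proj1 (triang w)) lmul1E lbarE big1 ?GRing.addr0 // => u uw.
rewrite hs /mscale.
case: (ltnP (ellF w) (ellF u)) => H.
  by rewrite top // lbar0 lmul0E.
by rewrite (proj2 (triang u)) ?lmulr0E // eq_sym.
Qed.

End BarLemmas.

Set Implicit Arguments.
Unset Strict Implicit.
Unset Printing Implicit Defensive.
Import GRing.Theory.
Local Open Scope fset_scope.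

Section Triang.
Variables (n : nat) (B : module n -> module n) (hB : is_bar_involution B).

Hypothesis lenstep : forall i, (0 < i < n)%N -> forall w : F n,
  conjF (sref n i) w = w \/ ellF (conjF (sref n i) w) = (ellF w + 2)%N
  \/ ellF w = (ellF (conjF (sref n i) w) + 2)%N.

Hypothesis exist_desc : forall u : F n, val u <> z0perm n ->
  exists2 i, (0 < i < n)%N & (ellF (conjF (sref n i) u) + 2 = ellF u)%N.

Lemma conj_eq i (w x : F n) : (conjF (sref n i) w == x) = (w == conjF (sref n i) x).
Proof.
apply/eqP/eqP => [<-|->]; by rewrite conjFK // sref_invol.
Qed.

Lemma Hact_basis i (x : F n) : (0 < i < n)%N ->
  (ellF x + 2 = ellF (conjF (sref n i) x))%N ->
  Hact (sref n i) (Mbasis x) = Mbasis (conjF (sref n i) x).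
Proof.
set t := sref n i; set u := conjF t x => hi hl.
have xu : conjF t u = x by rewrite /u conjFK // sref_invol.
have ux : u != x by apply/eqP => E; move: hl; rewrite -/u E; lia.
apply: mext => w k; rewrite /Hact /Mbasis.
case: eqP => [Ew|Nw].
  have wx : w != x by apply/eqP => E; move: Ew; rewrite E -/u; apply/eqP.
  have wu : w != u by apply/eqP => E; move: Ew; rewrite E xu; apply/eqP; rewrite eq_sym.
  by rewrite (negbTE wx) (negbTE wu) lmul_monoE !lzeroE mulr0.
rewrite conj_eq -/u.
case: ifP => hlt.
  have wx : w != x.
    by apply/eqP => E; move: hlt; rewrite E -/u /ellF -/(ellF u) -/(ellF x) -hl; lia.
  by rewrite (negbTE wx) laddE lmulr0E addr0.
by [].
Qed.

Lemma triang_all (u : F n) : B (Mbasis u) u = lone /\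
  forall w, w != u -> (ellF u <= ellF w)%N -> B (Mbasis u) w = lzero.
Proof.
case: (hB) => ha hs hh h0.
suff: forall N (u : F n), (ellF u < N)%N -> B (Mbasis u) u = lone /\
  forall w, w != u -> (ellF u <= ellF w)%N -> B (Mbasis u) w = lzero.
  by move=> H; apply: (H (ellF u).+1).
elim=> [//|N IH] {}u hu.
case: (eqVneq (val u) (z0perm n)) => [Ez|Nz].
  rewrite (h0 u Ez) /Mbasis eqxx; split => // w /negbTE -> //.
have [i hi hl] := exist_desc (elimN eqP Nz).
set t := sref n i in hl; set x := conjF t u in hl.
have ux : u = conjF t x by rewrite /x conjFK // sref_invol.
have [IH1 IH2] := IH x ltac:(lia).
have Mu : Mbasis u = Hact t (Mbasis x) by rewrite ux Hact_basis // -ux.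
rewrite Mu (hh i _ hi).
set m := B (Mbasis x).
have IH1m : m x = lone := IH1.
have xneu : x != u by apply/eqP => E; move: hl; rewrite E; lia.
have mu0 : m u = lzero by apply: IH2; [rewrite eq_sym|lia].
have xu : conjF t u = x by [].
split.
  apply: lext => k.
  rewrite /Hinvact /madd /mscale laddE /Hact xu (negbTE xneu).
  have -> : (ell (val x) < ell (val u))%N by rewrite /ellF in hl; lia.
  by rewrite laddE IH1m mu0 !lmulr0E !addr0.
move=> w wu hw.
have wx : w != x by apply/eqP => E; move: hw; rewrite E; lia.
have mw0 : m w = lzero by apply: IH2 => //; lia.
have w'x : conjF t w != x by rewrite conj_eq -ux.
have mw'0 : m (conjF t w) = lzero.
  apply: IH2 => //.
  have := lenstep hi w; rewrite -/t; case=> [->|[->|]]; lia.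
apply: lext => k.
rewrite /Hinvact /madd /mscale laddE /Hact mw0 mw'0 lmulr0E lzeroE addr0.
case: ifP => _; first by rewrite lmulr0E.
case: ifP => _; last by rewrite lzeroE.
by rewrite laddE lmulr0E lzeroE.
Qed.

End Triang.

Set Implicit Arguments.
Unset Strict Implicit.
Unset Printing Implicit Defensive.
Import GRing.Theory Order.TTheory Num.Theory.
Local Open Scope fset_scope.

Lemma lmul_oppE f g k : lmul (lopp f) g k = (- lmul f g k)%R.
Proof.
rewrite !lmulE.
have -> : finsupp (lopp f) = finsupp f.
  by apply/fsetP => a; rewrite !mem_finsupp loppE oppr_eq0.
rewrite -sumrN; apply: eq_bigr => a _; by rewrite loppE mulNr.
Qed.

Lemma lbar_oppmono c d : lbar (lopp (lmono c d)) = lopp (lmono c (- d)).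
Proof.
apply: lext => k; rewrite lbarE !loppE !lmonoE.
by rewrite -eqr_oppLR.
Qed.

Lemma bruhat_ell n (a b : F n) : bruhat_le a b -> (ellF a <= ellF b)%N.
Proof.
move/connectP => [p]; elim: p a => [|c p IH] a /=; first by move=> _ ->.
case/andP => /existsP [t /and3P [_ _ le]] pt lst.
exact: leq_trans le (IH c pt lst).
Qed.

Lemma sref_trans n i : (0 < i < n)%N -> is_transposition (sref n i).
Proof.
case: n => [|m] /andP[i0 im] //=.
apply/existsP; exists (inord i.-1); apply/existsP; exists (inord i).
rewrite eqxx andbT; apply/eqP => /(congr1 (@nat_of_ord _)).
rewrite !inordK; lia.
Qed.

Lemma sref_V n i : ((sref n i)^-1 = sref n i)%g.
Proof.
by rewrite -[LHS]mul1g -(sref_invol n i) -mulgA mulgV mulg1.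
Qed.

Lemma tau_char n i (x : F n) : (0 < i < n)%N ->
  (conjF (sref n i) x = x \/ ellF (conjF (sref n i) x) = (ellF x + 2)%N
  \/ ellF x = (ellF (conjF (sref n i) x) + 2)%N) ->
  tau x i = (conjF (sref n i) x == x) || (ellF (conjF (sref n i) x) < ellF x)%N.
Proof.
move=> hi hl; rewrite /tau; move: (hi) => /andP[-> ->] /=.
have [E|NE] /= := eqVneq (conjF (sref n i) x) x.
  by rewrite E /bruhat_le connect0.
apply/idP/idP => [/bruhat_ell le|lt].
  by case: hl => [E|[|]]; [move: NE; rewrite E eqxx|lia|lia].
apply/connect1/existsP; exists (sref n i); rewrite sref_trans //=.
rewrite conjF_val sref_V !mulgA sref_invol mul1g -mulgA sref_invol mulg1 eqxx /=.
move: lt; rewrite /ellF conjF_val sref_V; exact: ltnW.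
Qed.

Section Key.
Variables (n : nat) (B : module n -> module n) (hB : is_bar_involution B).
Variables (C : F n -> module n) (hC : is_canonical_basis B C).

Hypothesis lenstep : forall i, (0 < i < n)%N -> forall w : F n,
  conjF (sref n i) w = w \/ ellF (conjF (sref n i) w) = (ellF w + 2)%N
  \/ ellF w = (ellF (conjF (sref n i) w) + 2)%N.

Hypothesis exist_desc : forall u : F n, val u <> z0perm n ->
  exists2 i, (0 < i < n)%N & (ellF (conjF (sref n i) u) + 2 = ellF u)%N.

Lemma key i (x y : F n) : (0 < i < n)%N -> tau y i -> ~~ tau x i ->
  C y x (-1)%R != 0%R -> y = conjF (sref n i) x.
Proof.
move=> hi ty tx cx.
set t := sref n i.
have [BC cyy cne] := hC y.
set c := C y.
have cneg : forall w, w != y -> forall k, (0 <= k)%R -> c w k = 0%R.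
  move=> w wy k k0; rewrite /c; case: (cne w wy) => [[_ H]|->]; [exact: H|exact: lzeroE].
pose G := madd (Hact t c) (mscale (lopp (lmono 1 1)) c).
have BG : B G = G.
  case: (hB) => ha hs hh _.
  rewrite /G ha hs (hh i _ hi) BC lbar_oppmono.
  apply: mext => w k; rewrite /Hinvact /madd /mscale !laddE lopp_vmvE.
  rewrite !lmul_oppE !lmul_monoE !mul1r.
  have -> : (k - - 1 = k + 1)%R by rewrite opprK.
  ring.
have tK : forall w, conjF t (conjF t w) = w by move=> w; rewrite conjFK // sref_invol.
have Gfix : forall w, conjF t w = w -> forall k, G w k = 0%R.
  move=> w Ew k; rewrite /G /madd /mscale /Hact laddE Ew eqxx.
  by rewrite lmul_oppE !lmul_monoE subrr.
have Gdown : forall w, conjF t w != w -> (ellF (conjF t w) < ellF w)%N ->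
    forall k, G w k = (c (conjF t w) k - c w (k + 1))%R.
  move=> w Nw lt k; rewrite /G /madd /mscale /Hact laddE (negbTE Nw).
  rewrite /ellF in lt; rewrite lt laddE lvmvE lmul_oppE lmul_monoE mul1r.
  ring.
have Gup : forall w, conjF t w != w -> ~~ (ellF (conjF t w) < ellF w)%N ->
    forall k, G w k = (c (conjF t w) k - c w (k - 1))%R.
  move=> w Nw lt k; rewrite /G /madd /mscale /Hact laddE (negbTE Nw).
  rewrite /ellF in lt; rewrite (negbTE lt) lmul_oppE lmul_monoE mul1r.
  ring.
have tyl : (ellF (conjF t y) <= ellF y)%N.
  apply: bruhat_ell; by move: ty => /and3P[].
have G0 : forall w k, G w k = 0%R.
  suff Gz : forall w, G w = lzero by move=> w k; rewrite Gz lzeroE.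
  move=> w0; apply/eqP; apply/negPn/negP => nz.
  case: (@arg_maxnP _ w0 (fun w => G w != lzero) (@ellF n) nz) => w Pw wmax.
  have top : forall u, (ellF w < ellF u)%N -> G u = lzero.
    move=> u lt; apply/eqP; apply/negPn/negP => Pu; have := wmax u Pu; lia.
  have tri := triang_all hB lenstep exist_desc.
  have sym := bar_top hB tri BG top.
  have pos : forall k, (0 <= k)%R -> G w k = 0%R.
    move=> k k0.
    have [Ew|Nw] := eqVneq (conjF t w) w; first exact: Gfix.
    case: (boolP (ellF (conjF t w) < ellF w)%N) => lt.
      rewrite (Gdown w Nw lt k).
      have -> : c w (k + 1)%R = 0%R.
        have [->|wy] := eqVneq w y.
          rewrite /c cyy loneE; case: eqP => // E; exfalso; move: k0 E; lia.
        by apply: cneg => //; lia.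
      have -> : c (conjF t w) k = 0%R.
        apply: cneg => //; apply/eqP => E.
        have E2 : w = conjF t y by rewrite -E tK.
        move: lt tyl; rewrite E E2; lia.
      by rewrite subrr.
    have up : (ellF w < ellF (conjF t w))%N.
      by have := lenstep hi w; rewrite -/t; case=> [E|[|]]; [move: Nw; rewrite E eqxx|lia|lia].
    have := top _ up => /(congr1 (fun f : laurent => f (k - 1)%R)); rewrite lzeroE.
    rewrite (Gdown (conjF t w)) ?tK; last 2 first.
    - by rewrite eq_sym.
    - exact: up.
    rewrite (Gup w Nw lt k) subrK => E.
    by rewrite -opprB E oppr0.
  move/eqP: Pw; apply; apply: lext => k; rewrite lzeroE.
  case: (lerP 0 k) => [k0|k0]; first exact: pos.
  rewrite -sym; apply: pos; rewrite oppr_ge0; exact: ltW.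
have tx' := tx; rewrite (tau_char hi (lenstep hi x)) negb_or in tx'.
case/andP: tx' => Nx nlt.
have := G0 x 0%R; rewrite (Gup x Nx nlt 0%R) sub0r.
move=> E; apply/eqP; rewrite eq_sym; apply/negPn/negP => ne.
move: cx; rewrite -/c; move/eqP: E; rewrite subr_eq0 => /eqP <-.
by rewrite (cneg _ ne) ?eqxx.
Qed.

End Key.

Local Close Scope fset_scope.

Set Implicit Arguments.
Unset Strict Implicit.
Unset Printing Implicit Defensive.

Section Len.
Variables (n : nat) (c d : 'I_n) (cd : nat_of_ord d = (nat_of_ord c).+1).
Let t := tperm c d.

Lemma tpval k : (nat_of_ord k = c /\ nat_of_ord (t k) = d) \/ (nat_of_ord k = d /\ nat_of_ord (t k) = c)
  \/ (nat_of_ord k <> c /\ nat_of_ord k <> d /\ nat_of_ord (t k) = k).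
Proof.
rewrite /t; case: (eqVneq k c) => [->|kc]; first by left; rewrite tpermL.
case: (eqVneq k d) => [->|kd]; first by right; left; rewrite tpermR.
right; right; rewrite tpermD 1?eq_sym //; split; last split => //.
- by move/val_inj => E; move: kc; rewrite E eqxx.
- by move/val_inj => E; move: kd; rewrite E eqxx.
Qed.

Definition ellset (u : 'S_n) :=
  [set p : 'I_n * 'I_n | (p.1 < p.2)%N && (u p.2 < u p.1)%N].

Lemma ellE u : ell u = #|ellset u|. Proof. by []. Qed.

Lemma oeq (a b : 'I_n) : (a == b) = (nat_of_ord a == nat_of_ord b). Proof. by []. Qed.

Lemma cd_lt : (c < d)%N. Proof. by rewrite cd. Qed.

Lemma ell_tl (u : 'S_n) : (u c < u d)%N -> ell (t * u)%g = (ell u).+1.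
Proof.
move=> hlt.
pose psi (p : 'I_n * 'I_n) := (t p.1, t p.2).
have psi_inj : injective psi.
  move=> [p1 p2] [q1 q2] /= [] /(congr1 t) + /(congr1 t).
  by rewrite /t !tpermK => -> ->.
pose A' := [set p : 'I_n * 'I_n | (t p.1 < t p.2)%N && (u p.2 < u p.1)%N].
have E1 : ell (t * u)%g = #|A'|.
  rewrite /ell -(card_preimset _ psi_inj); apply: eq_card => p.
  by rewrite !inE /psi /= !permM /t !tpermK.
pose K := [set p : 'I_n * 'I_n | ((p.1 == c) && (p.2 == d)) || ((p.1 == d) && (p.2 == c))].
have D : A' :\: K = ellset u :\: K.
  apply/setP => -[p1 p2]; rewrite !inE /= !oeq.
  have t1 := tpval p1; have t2 := tpval p2.
  lia.
have uc : forall k j : 'I_n, nat_of_ord k = j -> nat_of_ord (u k) = u j.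
  by move=> k j /ord_inj ->.
have I0 : ellset u :&: K = set0.
  apply/setP => -[p1 p2]; rewrite !inE /= !oeq.
  have := uc p1 c; have := uc p1 d; have := uc p2 c; have := uc p2 d.
  lia.
have I1 : A' :&: K = [set (d, c)].
  apply/setP => -[p1 p2]; rewrite !inE /= xpair_eqE !oeq.
  have := uc p1 c; have := uc p1 d; have := uc p2 c; have := uc p2 d.
  have t1 := tpval p1; have t2 := tpval p2.
  lia.
rewrite E1 -(cardsID K A') D I1 cards1 ellE -(cardsID K (ellset u)) I0 cards0.
by [].
Qed.

Lemma ell_tr (u : 'S_n) : ((u^-1)%g c < (u^-1)%g d)%N -> ell (u * t)%g = (ell u).+1.
Proof.
move=> hlt.
pose A' := [set p : 'I_n * 'I_n | (p.1 < p.2)%N && (t (u p.2) < t (u p.1))%N].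
have E1 : ell (u * t)%g = #|A'|.
  by apply: eq_card => p; rewrite !inE !permM.
pose K := [set p : 'I_n * 'I_n | ((u p.1 == c) && (u p.2 == d)) || ((u p.1 == d) && (u p.2 == c))].
have D : A' :\: K = ellset u :\: K.
  apply/setP => -[p1 p2]; rewrite !inE /= !oeq.
  have t1 := tpval (u p1); have t2 := tpval (u p2).
  lia.
have ui : forall (k j : 'I_n), nat_of_ord (u k) = j -> nat_of_ord k = (u^-1)%g j.
  by move=> k j /ord_inj <-; rewrite permK.
have ui' : forall (k j : 'I_n), nat_of_ord k = (u^-1)%g j -> nat_of_ord (u k) = j.
  by move=> k j /ord_inj ->; rewrite permKV.
have I0 : ellset u :&: K = set0.
  apply/setP => -[p1 p2]; rewrite !inE /= !oeq.
  have := ui p1 c; have := ui p1 d; have := ui p2 c; have := ui p2 d.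
  lia.
have I1 : A' :&: K = [set ((u^-1)%g c, (u^-1)%g d)].
  apply/setP => -[p1 p2]; rewrite !inE /= xpair_eqE.
  apply/idP/idP.
    case/andP => /andP[_ lt2] /orP[/andP[/eqP h1 /eqP h2] | /andP[/eqP h1 /eqP h2]].
      by rewrite -h1 -h2 !permK !eqxx.
    by move: lt2; rewrite h1 h2 /t tpermL tpermR cd ltnNge leqnSn.
  case/andP => /eqP -> /eqP ->; rewrite !permKV hlt /t tpermL tpermR cd ltnSn !eqxx.
  by [].
rewrite E1 -(cardsID K A') D I1 cards1 ellE -(cardsID K (ellset u)) I0 cards0.
by [].
Qed.

End Len.

Set Implicit Arguments.
Unset Strict Implicit.
Unset Printing Implicit Defensive.

Section Comb.
Variables (n c : nat).
Hypothesis cn : c.+1 < n.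

Definition sw k := if k == c then c.+1 else if k == c.+1 then c else k.

Lemma sw_spec k : (k = c /\ sw k = c.+1) \/ (k = c.+1 /\ sw k = c)
  \/ (k <> c /\ k <> c.+1 /\ sw k = k).
Proof.
rewrite /sw; case: eqP => [->|h1]; first by left.
case: eqP => [->|h2]; first by right; left.
by right; right.
Qed.

Lemma swK k : sw (sw k) = k.
Proof. have := sw_spec k; have := sw_spec (sw k); lia. Qed.

Definition nonnest (h : nat -> nat) :=
  forall p q, q < n -> p < q -> q < h q -> h q < h p -> False.

Lemma transfer (f h : nat -> nat) :
  (forall k, k < n -> h k = sw (f (sw k))) ->
  nonnest f -> forall p q, q < n -> p < q -> q < h q -> h q < h p ->
  ((p = c \/ p = c.+1 \/ h p = c \/ h p = c.+1) /\
  (q = c \/ q = c.+1 \/ h q = c \/ h q = c.+1)) \/ (q = c /\ h q = c.+1).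
Proof.
move=> hf nf p q qn pq qhq hqp.
have Eq : f (sw q) = sw (h q) by rewrite hf // swK.
have Ep : f (sw p) = sw (h p) by rewrite hf ?swK //; lia.
have key : sw p < sw q -> sw q < sw (h q) -> sw (h q) < sw (h p) -> False.
  move=> a1 a2 a3; apply: (nf (sw p) (sw q)); rewrite ?Eq ?Ep //.
  have := sw_spec q; lia.
have := sw_spec p; have := sw_spec q; have := sw_spec (h p); have := sw_spec (h q).
lia.
Qed.

Lemma cong_facts (f : nat -> nat) k :
  (forall k, k < n -> f (f k) = k) -> k < n ->
  (k = c -> f k = f c) /\ (k = c.+1 -> f k = f c.+1) /\
  (f k = c -> k = f c) /\ (f k = c.+1 -> k = f c.+1).
Proof.
move=> ff kn; split; first by move->.
split; first by move->.
by split => E; rewrite -E ff.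
Qed.

Lemma sw_lt k : k < n -> sw k < n.
Proof. have := sw_spec k; lia. Qed.

Lemma back (f h : nat -> nat) :
  (forall k, k < n -> h k = sw (f (sw k))) ->
  (forall k, k < n -> f (f k) = k) ->
  f c < f c.+1 -> nonnest h -> nonnest f.
Proof.
move=> hf ff asc nh p q qn pq qfq fqp.
have fh : forall k, k < n -> f k = sw (h (sw k)).
  by move=> k kn; rewrite hf ?sw_lt // !swK.
case: (transfer fh nh qn pq qfq fqp) => [[tp tq]|[E1 E2]].
  have := cong_facts ff (ltn_trans pq qn); have := cong_facts ff qn.
  lia.
subst q; have h1 : f c.+1 = c by rewrite -E2 ff.
lia.
Qed.

Lemma sw_out k : k <> c -> k <> c.+1 -> sw k = k.
Proof. have := sw_spec k; lia. Qed.

Lemma finj (f : nat -> nat) a b : (forall k, k < n -> f (f k) = k) -> a < n -> b < n ->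
  f a = f b -> a = b.
Proof. by move=> ff an bn E; rewrite -(ff a an) E ff. Qed.

Lemma fixed_nat (f : nat -> nat) :
  (forall k, k < n -> f (f k) = k) -> (forall k, k < n -> f k < n) ->
  f c = c.+1 -> forall k, k < n -> sw (f (sw k)) = f k.
Proof.
move=> ff fr fc k kn.
have c0 : c < n by lia.
have fc1 : f c.+1 = c by rewrite -fc ff.
have := sw_spec k => -[[E ->]|[[E ->]|[E1 [E2 ->]]]].
- by rewrite fc1 E /sw eqxx fc.
- by rewrite fc E /sw eqxx; case: eqP => //; lia.
- have h1 : f k <> c.+1 by move=> E; apply: E1; apply: (finj ff kn c0); rewrite E fc.
  have h2 : f k <> c by move=> E; apply: E2; apply: (finj ff kn cn); rewrite E fc1.
  by rewrite sw_out.
Qed.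

Lemma desc_nat (f : nat -> nat) :
  (forall k, k < n -> f (f k) = k) -> (forall k, k < n -> f k <> k) ->
  f c.+1 < f c -> f c <> c.+1 -> sw (f (sw c)) < sw (f (sw c.+1)).
Proof.
move=> ff fp dc nfix.
have c0 : c < n by lia.
have -> : sw c = c.+1 by rewrite /sw eqxx.
have -> : sw c.+1 = c by rewrite /sw eqxx; case: eqP => //; lia.
have i1 : f c.+1 = c -> f c = c.+1 by move=> E; rewrite -{1}E ff.
have := fp _ c0; have := fp _ cn.
have := sw_spec (f c); have := sw_spec (f c.+1).
lia.
Qed.

Lemma tri_nat (f : nat -> nat) :
  (forall k, k < n -> f (f k) = k) ->
  f c < f c.+1 \/ f c = c.+1 \/ (f c.+1 < f c /\ f c <> c.+1).
Proof.
move=> ff.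
have c0 : c < n by lia.
have := @finj f c c.+1 ff c0 cn.
lia.
Qed.

Section Fwd.
Variables (f h : nat -> nat).
Hypothesis hf : forall k, k < n -> h k = sw (f (sw k)).
Hypothesis ff : forall k, k < n -> f (f k) = k.
Hypothesis fr : forall k, k < n -> f k < n.
Hypothesis fp : forall k, k < n -> f k <> k.
Hypothesis asc : f c < f c.+1.
Hypothesis nf : nonnest f.

Lemma ab_out : f c <> c /\ f c <> c.+1 /\ f c.+1 <> c /\ f c.+1 <> c.+1.
Proof.
have c0 : c < n by lia.
have f1 := fp c0; have f2 := fp cn; have g1 := ff c0; have g2 := ff cn.
split => // ; split; [move=> E|split => // E].
  by move: g1; rewrite E => g1; lia.
by move: g2; rewrite E => g2; lia.
Qed.

Lemma hc : h c = f c.+1.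
Proof.
have [_ [_ [_ H]]] := ab_out.
have [_ [H2 _]] := ab_out.
rewrite hf; last lia.
have -> : sw c = c.+1 by rewrite /sw eqxx.
have := sw_spec (f c.+1); have [_ [_ [H3 _]]] := ab_out; lia.
Qed.

Lemma hc1 : h c.+1 = f c.
Proof.
rewrite hf //.
have -> : sw c.+1 = c by rewrite /sw eqxx; case: eqP => //; lia.
have := sw_spec (f c); have [H1 [H2 _]] := ab_out; lia.
Qed.

Lemma hr k : k < n -> h k < n.
Proof. move=> kn; rewrite hf //; apply: sw_lt; apply: fr; exact: sw_lt. Qed.

Lemma hh k : k < n -> h (h k) = k.
Proof.
move=> kn; rewrite hf ?hr // hf // swK ff ?sw_lt // swK //.
Qed.

Variable e : nat.
Hypothesis en : e.+1 < n.
Hypothesis de : f e.+1 < f e.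
Hypothesis ae : h e < h e.+1.

Lemma far : e.+1 < c \/ c.+1 < e -> False.
Proof.
move: (ae) (de) => ae' de'.
move=> H.
have s1 : sw e = e by apply: sw_out; lia.
have s2 : sw e.+1 = e.+1 by apply: sw_out; lia.
have he := hf (ltnW en); rewrite s1 in he.
have he1 := hf en; rewrite s2 in he1.
rewrite he he1 in ae'.
have := cong_facts ff (ltnW en); have := cong_facts ff en.
have := sw_spec (f e); have := sw_spec (f e.+1).
lia.
Qed.

Lemma caseA_i : c.+1 < f c -> e.+1 = c -> False.
Proof.
move: (ae) (de) => ae' de'.
move=> H ec; rewrite ec in de'.
by apply: (nf (p:=e) (q:=c)); lia.
Qed.

Lemma caseB_i : c.+1 < f c -> e = c.+1 -> False.
Proof.
move: (ae) (de) => ae' de'.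
move=> H ec; subst e.
have s2 : sw c.+2 = c.+2 by apply: sw_out; lia.
have he1 := hf en; rewrite s2 in he1.
rewrite hc1 he1 in ae'.
have := cong_facts ff en.
have := sw_spec (f c.+2).
have := fp en.
have := nf (p:=c.+1) (q:=c.+2).
lia.
Qed.

Lemma caseA_ii : f c.+1 < c -> e.+1 = c -> False.
Proof.
move: (ae) (de) => ae' de'.
move=> H ec.
have s1 : sw e = e by apply: sw_out; lia.
have he := hf (ltnW en); rewrite s1 in he.
rewrite ec hc he in ae'; rewrite ec in de'.
have c0 : c < n by lia.
have := cong_facts ff (ltnW en).
have := sw_spec (f e).
have := nf (p:=f c) (q:=f e).
have := ff (ltnW en); have := ff c0; have := fr (ltnW en).
lia.
Qed.

Lemma caseB_ii : f c.+1 < c -> e = c.+1 -> False.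
Proof.
move: (ae) (de) => ae' de'.
move=> H ec; subst e.
have s2 : sw c.+2 = c.+2 by apply: sw_out; lia.
have he1 := hf en; rewrite s2 in he1.
rewrite hc1 he1 in ae'.
have := cong_facts ff en.
have := sw_spec (f c.+2).
have := nf (p:=f c.+2) (q:=f c.+1).
have := ff en; have := ff cn; have := fr cn.
lia.
Qed.

Lemma fwd : nonnest h.
Proof.
move=> p q qn pq qhq hqp.
have hf' : forall k, k < n -> h k = sw (f (sw k)) := hf.
case: (transfer hf' nf qn pq qhq hqp) => [[tp tq]|[E1 E2]]; last first.
  subst q; move: E2; rewrite hc; have := ab_out; lia.
have hcf := hc; have hc1f := hc1.
have := cong_facts hh (ltn_trans pq qn); have := cong_facts hh qn.
rewrite hcf hc1f.
have := ab_out.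
move=> AB C1 C2.
have : c.+1 < f c \/ f c.+1 < c by lia.
case=> Hc.
  have [ec|ec|ec] := ltngtP e c.
  - have [e1|e1] : e.+1 < c \/ e.+1 = c by lia.
    + by apply: far; left.
    + exact: caseA_i Hc e1.
  - have [e1|e1] : c.+1 < e \/ e = c.+1 by lia.
    + by apply: far; right.
    + exact: caseB_i Hc e1.
  - by subst e; lia.
have [ec|ec|ec] := ltngtP e c.
- have [e1|e1] : e.+1 < c \/ e.+1 = c by lia.
  + by apply: far; left.
  + exact: caseA_ii Hc e1.
- have [e1|e1] : c.+1 < e \/ e = c.+1 by lia.
  + by apply: far; right.
  + exact: caseB_ii Hc e1.
- by subst e; lia.
Qed.

End Fwd.

End Comb.

Section Zsec.
Variable n : nat.

Definition zf k := if odd k then k.-1 else k.+1.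

Lemma zf_spec k : (zf k = k.+1 /\ ~~ odd k) \/ (zf k = k.-1 /\ odd k /\ 0 < k).
Proof.
rewrite /zf; case: (boolP (odd k)) => ok; last by left.
by right; split => //; split => //; case: k ok.
Qed.

Lemma z_nonnest : nonnest n zf.
Proof.
move=> p q qn pq h1 h2.
have := zf_spec p; have := zf_spec q.
lia.
Qed.

Lemma all_asc_z (f : nat -> nat) :
  (forall k, k < n -> f (f k) = k) -> (forall k, k < n -> f k < n) ->
  (forall k, k < n -> f k <> k) ->
  (forall c, c.+1 < n -> f c < f c.+1 \/ f c = c.+1) ->
  forall k, k < n -> f k = zf k.
Proof.
move=> ff fr fp asc.
suff H : forall m j, j < m.*2 -> j < n -> f j = zf j.
  by move=> k kn; apply: (H k.+1) => //; rewrite -addnn; lia.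
elim=> [|m IH] j; first by [].
move=> jm jn.
have key : m.*2 < n -> f m.*2 = (m.*2).+1.
  move=> mn; set p := f m.*2.
  have pn : p < n by apply: fr.
  have fpp : f p = m.*2 by apply: ff.
  have np : ~ p < m.*2.
    move=> pl; have := IH p pl pn; rewrite fpp.
    have := zf_spec p; rewrite -addnn; lia.
  have pne : p <> m.*2 by apply: fp.
  case: (ltngtP p (m.*2).+1) => [pl|pg|//]; first by lia.
  have qn : (p.-1).+1 < n by lia.
  have fq := ff _ (ltnW qn).
  case: (asc _ qn) => [lt|eq].
    have hp : (p.-1).+1 = p by lia.
    rewrite hp fpp in lt.
    have := IH (f p.-1) lt (fr _ (ltnW qn)); rewrite fq.
    have := zf_spec (f p.-1); rewrite -addnn; lia.
  have hp : (p.-1).+1 = p by lia.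
  rewrite hp in eq.
  have := ff _ (ltnW qn); rewrite eq fpp; rewrite -addnn; lia.
have [jl|jl] : j < m.*2 \/ m.*2 <= j by lia.
  exact: IH.
have [je|je] : j = m.*2 \/ j = (m.*2).+1 by rewrite doubleS in jm; lia.
  by rewrite je key -?je //; rewrite je /zf odd_double.
have mn : m.*2 < n by lia.
rewrite je -(key mn) ff // key //.
by rewrite /zf /= odd_double.
Qed.

Lemma desc_nonnest (f : nat -> nat) c :
  (forall k, k < n -> f (f k) = k) -> (forall k, k < n -> f k < n) ->
  (forall k, k < n -> f k <> k) -> nonnest n f -> c.+1 < n ->
  f c.+1 < f c -> c < f c /\ f c.+1 < c.+1.
Proof.
move=> ff fr fp nf cn dc.
have c0 : c < n by lia.
have := nf (f c.+1) (f c) (fr _ c0); rewrite !ff //.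
have := nf c c.+1 cn.
have := fp _ c0; have := fp _ cn.
lia.
Qed.

Lemma two_desc (f : nat -> nat) i :
  (forall k, k < n -> f (f k) = k) -> (forall k, k < n -> f k < n) ->
  (forall k, k < n -> f k <> k) -> nonnest n f -> 0 < i -> i.+1 < n ->
  f i < f i.-1 -> f i.+1 < f i -> False.
Proof.
move=> ff fr fp nf i0 iS d1 d2.
have e : (i.-1).+1 = i by lia.
have := @desc_nonnest f i.-1 ff fr fp nf; rewrite e => /(_ (ltnW iS) d1).
have := @desc_nonnest f i ff fr fp nf iS d2.
lia.
Qed.

End Zsec.

Set Implicit Arguments.
Unset Strict Implicit.
Unset Printing Implicit Defensive.

Definition pf n (X : 'S_n) (k : nat) : nat :=
  oapp (fun o : 'I_n => nat_of_ord (X o)) k (insub k).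

Lemma pfE n (X : 'S_n) (o : 'I_n) : pf X o = X o.
Proof. by rewrite /pf valK. Qed.

Lemma pfE' n (X : 'S_n) k (kn : k < n) : pf X k = X (Ordinal kn).
Proof. by rewrite -pfE. Qed.

Section PF.
Variables (n : nat) (X : 'S_n).
Hypothesis hX : fpf_invol X.

Lemma XX (o : 'I_n) : X (X o) = o.
Proof. by case/andP: hX => /eqP XX _; rewrite -permM XX perm1. Qed.

Lemma pf_fr k : k < n -> pf X k < n.
Proof. by move=> kn; rewrite (pfE' X kn). Qed.

Lemma pf_ff k : k < n -> pf X (pf X k) = k.
Proof. by move=> kn; rewrite (pfE' X kn) pfE XX. Qed.

Lemma pf_fp k : k < n -> pf X k <> k.
Proof.
move=> kn; rewrite (pfE' X kn) => E.
case/andP: hX => _ /forallP /(_ (Ordinal kn)); rewrite -val_eqE /= E eqxx //.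
Qed.
End PF.

Lemma perm_pf n (X Y : 'S_n) : (forall k, k < n -> pf X k = pf Y k) -> X = Y.
Proof.
move=> H; apply/permP => o; apply: val_inj => /=.
by rewrite -!pfE H.
Qed.

Lemma sref_ord n i : 0 < i < n -> exists c d : 'I_n,
  [/\ sref n i = tperm c d, nat_of_ord c = i.-1 & nat_of_ord d = i].
Proof.
case: n => [|m] /andP[i0 im] //.
exists (inord i.-1), (inord i); split => //; rewrite inordK //; lia.
Qed.

Lemma tperm_sw n (c d : 'I_n) (cd : nat_of_ord d = (nat_of_ord c).+1) (o : 'I_n) :
  nat_of_ord (tperm c d o) = sw c o.
Proof. have := tpval c d o; have := sw_spec c o; lia. Qed.

Lemma pf_conj n (x : F n) i k : 0 < i < n -> k < n ->
  pf (val (conjF (sref n i) x)) k = sw i.-1 (pf (val x) (sw i.-1 k)).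
Proof.
move=> hi kn; have [c [d [E hc hd]]] := sref_ord hi.
have cd : nat_of_ord d = (nat_of_ord c).+1 by rewrite hc hd; lia.
rewrite conjF_val sref_V E (pfE' _ kn) !permM tperm_sw // -pfE tperm_sw // hc.
by [].
Qed.

Lemma ell_conj2 n (w : 'S_n) (c d : 'I_n) : fpf_invol w ->
  nat_of_ord d = (nat_of_ord c).+1 -> w c < w d ->
  ell (tperm c d * w * tperm c d)%g = (ell w).+2.
Proof.
move=> hw cd lt.
have wV : (w^-1 = w)%g.
  by case/andP: hw => /eqP ww _; rewrite -[LHS]mul1g -ww -mulgA mulgV mulg1.
rewrite (ell_tr cd); first by rewrite (ell_tl cd).
rewrite invMg wV tpermV !permM !tperm_sw //.
have := pf_fp hw (ltn_ord c); have := pf_ff hw (ltn_ord d).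
rewrite !pfE.
have i1 : nat_of_ord (w c) = d -> nat_of_ord (w d) = c.
  by move/ord_inj => E; rewrite -E XX.
have := sw_spec c (w c); have := sw_spec c (w d).
lia.
Qed.

Section Trich.
Variables (n : nat) (i : nat) (hi : 0 < i < n).
Let t := sref n i.

Lemma ell_up (x : F n) : pf (val x) i.-1 < pf (val x) i.-1.+1 ->
  ellF (conjF t x) = (ellF x + 2)%N.
Proof.
have [c [d [E hc hd]]] := sref_ord hi.
have cd : nat_of_ord d = (nat_of_ord c).+1 by rewrite hc hd; lia.
have e1 : i.-1.+1 = i by lia.
rewrite e1 -hc -hd !pfE => lt.
rewrite /ellF conjF_val /t sref_V E ell_conj2 //; first lia.
exact: (valP x).
Qed.

Lemma trich (x : F n) :
  let f := pf (val x) in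
  (f i.-1 < f i.-1.+1 /\ ellF (conjF t x) = (ellF x + 2)%N) \/
  (f i.-1 = i.-1.+1 /\ conjF t x = x) \/
  (f i.-1.+1 < f i.-1 /\ ellF x = (ellF (conjF t x) + 2)%N).
Proof.
move=> f.
have cn : i.-1.+1 < n by lia.
have ff := pf_ff (valP x); have fr := pf_fr (val x); have fp := pf_fp (valP x).
case: (tri_nat cn ff) => [lt|[fx|[dc nfix]]].
- by left; split => //; apply: ell_up.
- right; left; split => //.
  apply: val_inj; apply: perm_pf => k kn.
  by rewrite pf_conj // (fixed_nat cn ff fr fx).
- right; right; split => //.
  set y := conjF t x.
  have yx : conjF t y = x by rewrite /y conjFK // sref_invol.
  rewrite -{1}yx ell_up //.
  have cn' : i.-1 < n by lia.
  rewrite !pf_conj //.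
  exact: (desc_nat cn ff fp dc nfix).
Qed.

Lemma lenstep_i (w : F n) :
  conjF t w = w \/ ellF (conjF t w) = (ellF w + 2)%N
  \/ ellF w = (ellF (conjF t w) + 2)%N.
Proof. by case: (trich w) => [[_ ->]|[[_ ->]|[_ ->]]]; auto. Qed.

Lemma tau_desc (x : F n) : tau x i = (pf (val x) i < pf (val x) i.-1).
Proof.
have e1 : i.-1.+1 = i by lia.
rewrite (tau_char hi (lenstep_i x)).
case: (trich x) => [[lt El]|[[fx ->]|[dc ->]]].
- rewrite e1 in lt.
  have Nx : conjF t x != x by apply/eqP => E; move: El; rewrite E; lia.
  rewrite (negbTE Nx) El /= -[sval x]/(\val x); lia.
- rewrite e1 in fx; rewrite eqxx /= -[sval x]/(\val x); symmetry; apply/idP.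
  have ff := pf_ff (valP x).
  have : pf (val x) i = i.-1 by rewrite -fx ff //; lia.
  lia.
- rewrite e1 in dc.
  have -> : (ellF (conjF t x) < ellF (conjF t x) + 2) = true by lia.
  rewrite orbT; symmetry; apply/idP; exact: dc.
Qed.

End Trich.

Lemma zf_lt m k : k < m.*2 -> zf k < m.*2.
Proof.
rewrite /zf; case: ifP => ok kl; first lia.
have : k.+1 != m.*2.
  by apply/eqP => E; move: (congr1 odd E); rewrite /= ok odd_double.
lia.
Qed.

Lemma z0_prod n m : m.*2 <= n -> forall k (kn : k < n),
  nat_of_ord ((\prod_(0 <= i < m.*2 | odd i) sref n i)%g (Ordinal kn)) =
  if k < m.*2 then zf k else k.
Proof.
elim: m => [|m IH] hm k kn.
  by rewrite big_geq // perm1.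
rewrite doubleS in hm *.
rewrite big_mkcond big_nat_recr //= big_nat_recr //= -big_mkcond /=.
rewrite odd_double /= mulg1.
have hi : 0 < (m.*2).+1 < n by lia.
have [c [d [E hc hd]]] := sref_ord hi.
have cd : nat_of_ord d = (nat_of_ord c).+1 by rewrite hc hd.
rewrite permM E tperm_sw // IH; last lia.
rewrite hc /=.
have z1 : zf m.*2 = (m.*2).+1 by rewrite /zf odd_double.
have z2 : zf (m.*2).+1 = m.*2 by rewrite /zf /= odd_double.
case: (ltnP k m.*2) => hk.
  have zl := zf_lt hk.
  have := sw_spec m.*2 (zf k).
  case: ifP; lia.
have i1 : k = m.*2 -> zf k = (m.*2).+1 by move->.
have i2 : k = (m.*2).+1 -> zf k = m.*2 by move->.
have := sw_spec m.*2 k.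
case: ifP; lia.
Qed.

Lemma z0_pf n : ~~ odd n -> forall k, k < n -> pf (z0perm n) k = zf k.
Proof.
move=> nodd k kn.
have En : n = (n./2).*2.
  by rewrite -{1}(odd_double_half n) (negbTE nodd).
rewrite (pfE' _ kn) /z0perm -big_mkord.
have := @z0_prod n (n./2) ltac:(lia) k kn.
rewrite -En kn => <-.
by [].
Qed.

Lemma exist_desc_pf n (u : F n) : ~~ odd n -> val u <> z0perm n ->
  exists2 i, 0 < i < n & (ellF (conjF (sref n i) u) + 2 = ellF u)%N.
Proof.
move=> nodd Nz.
case: (boolP [exists i : 'I_n, (0 < i) && (ellF (conjF (sref n i) u) + 2 == ellF u)]).
  move/existsP => [i /andP [i0 /eqP E]].
  by exists i => //; rewrite i0 ltn_ord.
move=> H; exfalso; apply: Nz; apply: perm_pf => k kn.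
rewrite z0_pf //.
apply: (all_asc_z (pf_ff (valP u)) (pf_fr (val u)) (pf_fp (valP u))) => // c cn.
have hi : 0 < c.+1 < n by lia.
case: (trich hi u) => /= [[lt _]|[[fx _]|[dc El]]].
- by left.
- by right.
move/negP: H; case; apply/existsP; exists (Ordinal cn) => /=.
by rewrite El eqxx.
Qed.

Set Implicit Arguments.
Unset Strict Implicit.
Unset Printing Implicit Defensive.

Lemma ntau_asc n (x : F n) i : 0 < i < n -> ~~ tau x i ->
  pf (val x) i.-1 < pf (val x) i.-1.+1.
Proof.
move=> hi; rewrite (tau_desc hi) -leqNgt => le.
have e1 : i.-1.+1 = i by lia.
rewrite e1; rewrite leq_eqVlt in le; case/orP: le => // /eqP E.
have := finj (pf_ff (valP x)) _ _ E; lia.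
Qed.

Lemma tau_dsc n (x : F n) i : 0 < i < n -> tau x i ->
  pf (val x) i.-1.+1 < pf (val x) i.-1.
Proof.
move=> hi; rewrite (tau_desc hi).
have e1 : i.-1.+1 = i by lia.
by rewrite e1.
Qed.

Lemma tau_range n (x : F n) i : tau x i -> 0 < i < n.
Proof. by case/and3P => -> ->. Qed.

Lemma not_subset n (x y : F n) : ~~ tau_subset x y ->
  exists i : 'I_n, tau x i && ~~ tau y i.
Proof.
rewrite /tau_subset negb_forall => /existsP [i]; rewrite negb_imply => H.
by exists i.
Qed.

Theorem lemma7p2 (n : nat) (n_even : ~~ odd n) (n_ge2 : (2 <= n)%N)
    (B : module n -> module n) (hB : is_bar_involution B)
    (C : F n -> module n) (hC : is_canonical_basis B C)
    (x : F n) (hx : in_C1 C x) (i : nat) (hi : (1 <= i <= n - 2)%N) :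
  ~ (tau x i /\ tau x i.+1).
Proof.
have ls : forall i, (0 < i < n)%N -> forall w : F n,
  conjF (sref n i) w = w \/ ellF (conjF (sref n i) w) = (ellF w + 2)%N
  \/ ellF w = (ellF (conjF (sref n i) w) + 2)%N.
  by move=> j hj w; apply: lenstep_i.
have ed : forall u : F n, val u <> z0perm n ->
  exists2 i, (0 < i < n)%N & (ellF (conjF (sref n i) u) + 2 = ellF u)%N.
  by move=> u; apply: exist_desc_pf.
pose P (w : F n) := nonnest n (pf (val w)).
have base : forall z : F n, val z = z0perm n -> P z.
  move=> z Ez p q qn pq h1 h2.
  have pn : p < n by lia.
  move: h1 h2; rewrite Ez !z0_pf //.
  exact: z_nonnest qn pq.
have step : forall a b : F n, bidirected C a b -> P a -> P b.
  move=> a b /andP [oab oba] Pa.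
  move: oab; rewrite /omega; case: ifP => [nsab|]; last by rewrite eqxx.
  move=> Hab; move: oba; rewrite /omega; case: ifP => [nsba|]; last by rewrite eqxx.
  move=> _.
  have ffa := pf_ff (valP a); have fra := pf_fr (val a); have fpa := pf_fp (valP a).
  have ffb := pf_ff (valP b); have frb := pf_fr (val b); have fpb := pf_fp (valP b).
  have [mab|mba] : mu C a b != 0%R \/ mu C b a != 0%R.
    case: (eqVneq (mu C a b) 0%R) => [E|]; last by left.
    by right; move: Hab; rewrite E GRing.add0r.
  - have [i0 /andP [tb nta]] := not_subset nsba.
    have hi0 := tau_range tb.
    have Eb := key hB hC ls ed hi0 tb nta mab.
    have [j0 /andP [ta ntb]] := not_subset nsab.
    have hj0 := tau_range ta.
    have cn : (i0.-1).+1 < n by lia.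
    have hf : forall k, k < n -> pf (val b) k = sw i0.-1 (pf (val a) (sw i0.-1 k)).
      by move=> k kn; rewrite Eb pf_conj.
    have en : (j0.-1).+1 < n by lia.
    exact: (fwd cn hf ffa fra fpa (ntau_asc hi0 nta) Pa en (tau_dsc hj0 ta)
             (ntau_asc hj0 ntb)).
  - have [i0 /andP [ta ntb]] := not_subset nsab.
    have hi0 := tau_range ta.
    have Ea := key hB hC ls ed hi0 ta ntb mba.
    have cn : (i0.-1).+1 < n by lia.
    have hf : forall k, k < n -> pf (val a) k = sw i0.-1 (pf (val b) (sw i0.-1 k)).
      by move=> k kn; rewrite Ea pf_conj.
    exact: (back cn hf ffb (ntau_asc hi0 ntb) Pa).
have Px : P x.
  case: hx => z [Ez /connectP [p pth ->]].
  have gen : forall (p : seq (F n)) (z : F n), P z -> path (@bidirected n C) z p -> P (last z p).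
    elim=> [|c p' IH] z' Pz' //=.
    case/andP => bc pth'; exact: IH _ (step _ _ bc Pz') pth'.
  exact: gen _ _ (base z Ez) pth.
case=> t1 t2.
have h1 : 0 < i < n by lia.
have h2 : 0 < i.+1 < n by lia.
have d1 := tau_dsc h1 t1; have d2 := tau_dsc h2 t2.
have e1 : i.-1.+1 = i by lia.
rewrite e1 in d1; rewrite /= in d2.
apply: (two_desc (pf_ff (valP x)) (pf_fr (val x)) (pf_fp (valP x)) Px) d1 d2; lia.
Qed.
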